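(* Let $k\ge 3$, let $w\in\mathbb{C}^k$ with $w_i\neq 0$ for all $i\in\{1,\ldots,k\}$, and let $a=(a_{ij})\in M_k(\mathbb{C})$ be positive semidefinite with $a_{ij}=w_i\overline{w_j}$ for all $i,j$ with $|i-j|\le 1$. Then $a_{ij}=w_i\overline{w_j}$ for all $i,j\in\{1,\ldots,k\}$. *)

(* Defs.v *)
From mathcomp Require Import all_boot all_order all_algebra.
Set Implicit Arguments. Unset Strict Implicit. Unset Printing Implicit Defensive.
Import Order.TTheory GRing.Theory Num.Theory.
Local Open Scope ring_scope.

Definition psdmx (C : numClosedFieldType) (n : nat) (a : 'M[C]_n) : Prop :=
  a^T = map_mx Num.conj a /\
  forall v : 'cV[C]_n, 0 <= ((map_mx Num.conj v)^T *m a *m v) 0 0.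

(* Main.v *)
Require Import Defs.
From mathcomp Require Import all_boot all_order all_algebra.
From mathcomp Require Import ring.
Import Order.TTheory GRing.Theory Num.Theory.
Local Open Scope ring_scope.
Section S.
Variable C : numClosedFieldType.
Variable n : nat.
Variable a : 'M[C]_n.
Hypothesis herm : forall i j, a j i = Num.conj (a i j).
Definition F (f : 'I_n -> C) := \sum_i \sum_j Num.conj (f i) * a i j * f j.
Hypothesis Fpos : forall f, 0 <= F f.

Lemma sum_ind (x : 'I_n -> C) m : \sum_j x j * (j == m)%:R = x m.
Proof.
rewrite (bigD1 m) //= eqxx mulr1 big1 ?addr0 // => j /negbTE ->; by rewrite mulr0.
Qed.

Lemma null_row f r : F f = 0 -> \sum_j a r j * f j = 0.
Proof.
move=> F0.
set c := \sum_j a r j * f j.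
pose q : C := a r r.
have qr : Num.conj q = q by rewrite /q -herm.

pose l : C := q + 1.
have lr : Num.conj l = l by rewrite /l rmorphD rmorph1; congr (_ + _); exact: qr.
pose g i := l * f i - c * (i == r)%:R.
have Hc : \sum_i Num.conj (f i) * a i r = Num.conj c.
  rewrite /c rmorph_sum; apply: eq_bigr => i _.
  by rewrite rmorphM herm mulrC.
have E : F g = l * l * F f - l * (c * Num.conj c) - l * (Num.conj c * c) + Num.conj c * c * q.
  rewrite /F.
  have -> : \sum_i \sum_j Num.conj (g i) * a i j * g j =
     \sum_i \sum_j (l * l * (Num.conj (f i) * a i j * f j)
        - l * c * ((Num.conj (f i) * a i j) * (j == r)%:R)
        - l * Num.conj c * ((a i j * f j) * (i == r)%:R)
        + Num.conj c * c * (a i j * (j == r)%:R * (i == r)%:R)).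
    apply: eq_bigr => i _; apply: eq_bigr => j _.
    have cg : Num.conj (g i) = l * Num.conj (f i) - Num.conj c * (i == r)%:R.
      rewrite /g rmorphB !rmorphM rmorph_nat; congr (_ * _ - _); exact: lr.
    rewrite cg /g; ring.
  under eq_bigr => i _ do rewrite big_split /= !sumrB.
  rewrite big_split /= !sumrB.
  congr (_ - _ - _ + _).
  - rewrite mulr_sumr; apply: eq_bigr => i _; by rewrite -mulr_sumr.
  - under eq_bigr => i _ do rewrite -mulr_sumr sum_ind.
    by rewrite -mulr_sumr Hc mulrA.
  - rewrite exchange_big /=.
    under eq_bigr => j _ do rewrite -mulr_sumr (eq_bigr (fun i => (a i j * f j) * (i == r)%:R)) // sum_ind.
    rewrite -mulr_sumr -/c; ring.
  - rewrite (bigD1 r) //= [X in _ + X]big1 ?addr0; last first.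
      move=> i /negbTE ir; apply: big1 => j _; by rewrite ir !mulr0.
    rewrite -mulr_sumr; congr (_ * _).
    by rewrite (eq_bigr (fun j => a r j * (j == r)%:R)) ?sum_ind // => j _; rewrite eqxx mulr1.
have := Fpos g; rewrite E F0 mulr0 sub0r.
have -> : - (l * (c * Num.conj c)) - l * (Num.conj c * c) + Num.conj c * c * q
   = - ((c * Num.conj c) * (q + 2)) by rewrite /l; ring.
rewrite oppr_ge0 => H.
have p0 : 0 <= c * Num.conj c by rewrite -normCK exprn_ge0.
have q0 : 0 <= q.
  have := Fpos (fun i => (i == r)%:R).
  rewrite /F (bigD1 r) //= [X in _ + X]big1 ?addr0; last first.
    move=> i /negbTE ->; apply: big1 => j _; by rewrite rmorph0 !mul0r.
  rewrite (bigD1 r) //= [X in _ + X]big1 ?addr0; last first.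
    move=> j /negbTE ->; by rewrite mulr0.
  by rewrite eqxx rmorph1 mul1r mulr1.
have q2 : 0 < q + 2 by apply: ltr_wpDl.
have : c * Num.conj c * (q + 2) = 0 by apply/eqP; rewrite eq_le H /= mulr_ge0 // ltW.
move/eqP; rewrite mulf_eq0 (gt_eqF q2) orbF -normCK sqrf_eq0 normr_eq0 => /eqP //.
Qed.

Lemma sum_two (x : 'I_n -> C) m m' al be :
  \sum_j x j * ((j == m)%:R * al - (j == m')%:R * be) = x m * al - x m' * be.
Proof.
under eq_bigr => j _ do rewrite mulrBr !mulrA.
by rewrite sumrB -!mulr_suml !sum_ind.
Qed.
End S.
Arguments F {C n}.
Arguments null_row {C n a}.
Arguments sum_two {C n}.

Lemma quadE (C : numClosedFieldType) n (a : 'M[C]_n) (f : 'I_n -> C) :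
  ((map_mx Num.conj (\col_i f i))^T *m a *m (\col_i f i)) 0 0 = F a f.
Proof.
rewrite /F mxE.
under eq_bigr => j _ do rewrite !mxE big_distrl /=.
rewrite exchange_big /=; apply: eq_bigr => i _; apply: eq_bigr => j _.
by rewrite !mxE.
Qed.

Theorem lemma4p12 (C : numClosedFieldType) (k : nat) (hk : (3 <= k)%N)
  (w : 'I_k -> C) (a : 'M[C]_k)
  (hw : forall i : 'I_k, w i != 0)
  (ha : psdmx a)
  (hband : forall i j : 'I_k, (i <= j.+1)%N -> (j <= i.+1)%N ->
     a i j = w i * Num.conj (w j)) :
  forall i j : 'I_k, a i j = w i * Num.conj (w j).
Proof.
case: ha => hT hpos.
have herm : forall i j, a j i = Num.conj (a i j).
  move=> i j; have := congr1 (fun M : 'M[C]_k => M i j) hT; by rewrite !mxE.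
have Fpos : forall f, 0 <= F a f by move=> f; rewrite -quadE.
have cw : forall i, Num.conj (w i) != 0 by move=> i; rewrite conjC_eq0.
have ccw : forall i, Num.conj ((Num.conj (w i))^-1) = (w i)^-1.
  move=> i; rewrite fmorphV; congr (_^-1); exact: conjCK.
have step : forall r (m m' : 'I_k), val m' = (val m).+1 ->
    a r m / Num.conj (w m) = a r m' / Num.conj (w m').
  move=> r m m' hm.
  pose al := (Num.conj (w m))^-1; pose be := (Num.conj (w m'))^-1.
  pose f (i : 'I_k) : C := (i == m)%:R * al - (i == m')%:R * be.
  have cf : forall i, Num.conj (f i) = (i == m)%:R * Num.conj al - (i == m')%:R * Num.conj be.
    move=> i; rewrite /f rmorphB !rmorphM !rmorph_nat //.
  have F0 : F a f = 0.
    rewrite /F.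
    under eq_bigr => i _ do rewrite (eq_bigr (fun j => (Num.conj (f i) * a i j) * f j)) // sum_two.
    pose g (i : 'I_k) := (i == m)%:R * Num.conj al - (i == m')%:R * Num.conj be.
    rewrite (eq_bigr (fun i => (a i m * g i) * al - (a i m' * g i) * be)); last first.
      move=> i _; have -> : g i = Num.conj (f i) by rewrite cf.
      ring.
    rewrite sumrB -!mulr_suml /g.
    rewrite !sum_two /al /be !ccw.
    rewrite !hband ?hm ?leqnn ?leqnSn ?(leqW (leqnSn _)) //.
    by field; rewrite ?hw ?cw.
  have := null_row herm Fpos f r F0.
  rewrite sum_two => /eqP; rewrite subr_eq0 => /eqP.
  by rewrite /al /be.
move=> r j.
have k0 : (0 < k)%N by apply: leq_trans hk.
have all0 : forall t (ht : (t < k)%N),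
    a r (Ordinal ht) / Num.conj (w (Ordinal ht)) = a r (Ordinal k0) / Num.conj (w (Ordinal k0)).
  elim=> [|t IH] ht; first by congr (a r _ / Num.conj (w _)); apply: val_inj.
  have ht' : (t < k)%N by apply: ltnW.
  by rewrite -(IH ht') (step r (Ordinal ht') (Ordinal ht)).
have hj := all0 _ (ltn_ord j).
have hr := all0 _ (ltn_ord r).
have ej : Ordinal (ltn_ord j) = j by apply: val_inj.
have er : Ordinal (ltn_ord r) = r by apply: val_inj.
rewrite er in hr; rewrite ej -hr (hband r r) ?leqnSn // in hj.
rewrite mulfK ?cw // in hj.
by rewrite -hj mulfVK ?cw.
Qed.
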